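(* Let $\Phi$ be a root system of affine type and $c$ a Coxeter element. A root $\alpha\in\Phi_c\setminus\{\delta\}$ is $c$-compatible with $\delta$ (i.e. $(\alpha\|\delta)_c=0$) if and only if $\alpha\in\Upsilon^{\mathrm{re}}_c$.
   Context: $A=[a_{ij}]$ is an $n\times n$ symmetrizable Cartan matrix of affine type with symmetrizing constants $d_i$; $V$ has basis of simple roots $\Pi=\{\alpha_1,\dots,\alpha_n\}$, co-roots $\alpha_i^\vee=d_i^{-1}\alpha_i$, symmetric form $K(\alpha_i^\vee,\alpha_j)=a_{ij}$, reflections $s_i(v)=v-K(\alpha_i^\vee,v)\alpha_i$. $\Phi$ is the root system, $\Phi^+$ the positive roots; $[v:\alpha_i]$, $[v:\alpha_i^\vee]$ coordinates in root and co-root bases; $[x]_+=\max(x,0)$; $\beta^\vee=\frac2{K(\beta,\beta)}\beta$ for real roots, $(-\alpha_i)^\vee=-\alpha_i^\vee$; $\delta$ is the positive imaginary root closest to $0$ and $\delta^\vee$ the positive imaginary root closest to $0$ of the dual root system (Cartan matrix $A^T$). The Coxeter element is indexed $c=s_1\cdots s_n$. With $\alpha_{\mathrm{aff}}$ the affine simple root, $V_{\mathrm{fin}}$ the span of the others, $\Phi_{\mathrm{fin}}=\Phi\cap V_{\mathrm{fin}}$: $\gamma_c\in V_{\mathrm{fin}}$ unique with $c\gamma_c=\gamma_c+\delta$, $U_c=\{v:K(\gamma_c,v)=0\}$, $\Upsilon_c=\Phi\cap U_c$, $\Upsilon^{\mathrm{re}}_c$ the positive real roots in $U_c$ whose $c$-orbit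 contains a root of $\Phi_{\mathrm{fin}}$, $\Phi_c=-\Pi\cup(\Phi^+\setminus U_c)\cup\Upsilon^{\mathrm{re}}_c\cup\{\delta\}$. Real roots of $\Upsilon_c$ form a root system with irreducible components of affine type A; $\Pi_c$ is the unique minimal subset of $\Upsilon_c\cap\Phi^+$ whose nonnegative span contains $\Upsilon_c\cap\Phi^+$. Tube support $\mathrm{Supp}_{\Pi_c}(\beta)$: elements of $\Pi_c$ with nonzero coefficient in the unique expansion of $\beta$ in simple roots of its component; union for sets; component-full: containing all simple roots of some component. $\mathrm{adj}(\alpha,\beta)$ counts elements $\beta_j$ of $\mathrm{Supp}_{\Pi_c}(\beta)$ with $\beta_j\in\mathrm{Supp}_{\Pi_c}(c\alpha)\cup\mathrm{Supp}_{\Pi_c}(c^{-1}\alpha)$ and $\beta_j\notin\mathrm{Supp}_{\Pi_c}(\alpha)$. $(\alpha\|\beta)_c^{\to}=-\sum_{i}[\alpha^\vee:\alpha_i^\vee][\beta:\alpha_i]-\sum_{j<i}a_{ij}[\alpha^\vee:\alpha_i^\vee]_+[\beta:\alpha_j]_+$, $(\alpha\|\beta)_c^{\leftarrow}=-\sum_{i}[\alpha^\vee:\alpha_i^\vee][\beta:\alpha_i]-\sum_{i<j}a_{ij}[\alpha^\vee:\alpha_i^\vee]_+[\beta:\alpha_j]_+$; $(\alpha\|\beta)_c=\mathrm{adj}(\alpha,\beta)$ if $\alpha,\beta\in\Upsilon^{\mathrm{re}}_c$ and $\{\alpha,\beta\}$ is component-full, otherwise the maximum of these two. Distinct roots are $c$-compatible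 when their compatibility degree is $0$. *)

(* Defs.v *)
From HB Require Import structures.
From mathcomp Require Import all_boot all_order all_algebra.
Set Implicit Arguments. Unset Strict Implicit. Unset Printing Implicit Defensive.
Import Order.TTheory GRing.Theory Num.Theory.
Local Open Scope ring_scope.

Section AffineRoots.

Variable n : nat.
Variable A : 'M[int]_n.
Variable d : 'I_n -> rat.

Definition a (i j : 'I_n) : rat := (A i j)%:~R.

(* V, with coordinates in the basis of simple roots: v = sum_i [v:alpha_i] alpha_i *)
Definition vec := 'rV[rat]_n.
Definition coeff (v : vec) (i : 'I_n) : rat := v ord0 i.

Definition is_GCM : Prop :=
  (forall i, A i i = 2) /\ (forall i j, i != j -> A i j <= 0) /\
  (forall i j, A i j = 0 <-> A j i = 0).

Definition indecomposable : Prop :=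
  forall S : {set 'I_n}, S != set0 -> S != setT ->
    exists i j, [/\ i \in S, j \notin S & A i j != 0].

(* affine type (Kac, Thm 4.3 / Cor 4.3): indecomposable GCM with a
   positive vector u such that A u = 0 *)
Definition affine_type : Prop :=
  [/\ is_GCM, indecomposable &
      exists u : 'I_n -> rat, (forall i, 0 < u i) /\
                              (forall i, \sum_j a i j * u j = 0)].

Definition symmetrizing : Prop :=
  (forall i, 0 < d i) /\ (forall i j, d i * a i j = d j * a j i).

Definition simple (i : 'I_n) : vec := delta_mx ord0 i.

Definition K (u v : vec) : rat :=
  \sum_i \sum_j coeff u i * coeff v j * (d i * a i j).

Definition simple_co (i : 'I_n) : vec := (d i)^-1 *: simple i.

Definition refl (i : 'I_n) (v : vec) : vec := v - K (simple_co i) v *: simple i.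

Definition act (w : seq 'I_n) (v : vec) : vec := foldr refl v w.

Definition real_root (v : vec) : Prop := exists w i, v = act w (simple i).

Definition isint (x : rat) : Prop := exists z : int, x = z%:~R.

(* imaginary roots of affine type: the nonzero integer vectors of the radical
   (= nonzero integer multiples of delta) *)
Definition imag_root (v : vec) : Prop :=
  [/\ v != 0, forall i, isint (coeff v i) & forall i, K (simple_co i) v = 0].

Definition root (v : vec) : Prop := real_root v \/ imag_root v.

Definition positive (v : vec) : Prop := v != 0 /\ forall i, 0 <= coeff v i.

Definition pos_root (v : vec) : Prop := root v /\ positive v.

Definition is_delta (delta : vec) : Prop :=
  [/\ imag_root delta, positive delta &
      forall b, imag_root b -> positive b ->
        exists k : nat, (0 < k)%N /\ b = k%:R *: delta].

(* coordinates in the co-root basis: [v : alpha_i^vee] = d_i [v : alpha_i] *)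
Definition coco (v : vec) (i : 'I_n) : rat := d i * coeff v i.

(* imaginary roots of the dual root system (Cartan matrix A^T, simple roots
   alpha_i^vee) *)
Definition dual_imag (v : vec) : Prop :=
  [/\ v != 0, forall i, isint (coco v i) &
      forall i, \sum_j a j i * coco v j = 0].

Definition dual_positive (v : vec) : Prop := v != 0 /\ forall i, 0 <= coco v i.

Definition is_delta_dual (deltav : vec) : Prop :=
  [/\ dual_imag deltav, dual_positive deltav &
      forall b, dual_imag b -> dual_positive b ->
        exists k : nat, (0 < k)%N /\ b = k%:R *: deltav].

Definition coxeter (v : vec) : vec := act (enum 'I_n) v.
Definition coxeter_inv (v : vec) : vec := act (rev (enum 'I_n)) v.

Definition cpow (k : int) (v : vec) : vec :=
  match k with
  | Posz m => iter m coxeter v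
  | Negz m => iter m.+1 coxeter_inv v
  end.

Definition plus (x : rat) : rat := Num.max x 0.

Section WithData.

Variable aff : 'I_n.
Variable delta : vec.
Variable deltav : vec.
Variable gamma : vec.

(* co-roots: beta^vee = 2 beta / K(beta,beta) for real roots,
   (k delta)^vee = k delta^vee for imaginary roots *)
Definition coroot (b : vec) : vec :=
  if K b b != 0 then (2 / K b b) *: b
  else ((\sum_i coeff b i) / (\sum_i coeff delta i)) *: deltav.

Definition Vfin (v : vec) : Prop := coeff v aff = 0.
Definition root_fin (v : vec) : Prop := root v /\ Vfin v.

Definition Uc (v : vec) : Prop := K gamma v = 0.
Definition Upsilon (v : vec) : Prop := root v /\ Uc v.

Definition Upsilon_re (v : vec) : Prop :=
  [/\ pos_root v, real_root v, Uc v & exists k : int, root_fin (cpow k v)].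

Definition Phi_c (v : vec) : Prop :=
  (exists i, v = - simple i) \/ (pos_root v /\ ~ Uc v) \/ Upsilon_re v \/
  v = delta.

Definition compat_right (al be : vec) : rat :=
  - (\sum_i coco (coroot al) i * coeff be i)
  - \sum_(i < n) \sum_(j < n | (j < i)%N)
        a i j * plus (coco (coroot al) i) * plus (coeff be j).

Definition compat_left (al be : vec) : rat :=
  - (\sum_i coco (coroot al) i * coeff be i)
  - \sum_(i < n) \sum_(j < n | (i < j)%N)
        a i j * plus (coco (coroot al) i) * plus (coeff be j).

Definition nonneg_span (S : vec -> Prop) (x : vec) : Prop :=
  exists s : seq (rat * vec),
    (forall e, e \in s -> 0 <= e.1 /\ S e.2) /\ x = \sum_(e <- s) e.1 *: e.2.

(* Pi_c: the minimal subset of Upsilon_c cap Phi^+ whose nonnegative span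
   contains Upsilon_c cap Phi^+ (= the intersection of all such subsets) *)
Definition in_Pic (p : vec) : Prop :=
  [/\ Upsilon p, positive p &
      forall S : vec -> Prop,
        (forall x, S x -> Upsilon x /\ positive x) ->
        (forall x, Upsilon x -> positive x -> nonneg_span S x) -> S p].

(* the connected components of Pi_c (irreducible components of the
   root system formed by the real roots of Upsilon_c) *)
Inductive same_comp (p : vec) : vec -> Prop :=
| sc_refl : in_Pic p -> same_comp p p
| sc_step q r : same_comp p q -> in_Pic r -> K q r != 0 -> same_comp p r.

Definition supp (b p : vec) : Prop :=
  in_Pic p /\
  exists s : seq (rat * vec),
    [/\ forall e, e \in s -> same_comp p e.2,
        uniq (map snd s),
        b = \sum_(e <- s) e.1 *: e.2 &
        exists2 e, e \in s & e.2 = p /\ e.1 != 0].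

Definition adj (al be : vec) (m : nat) : Prop :=
  exists s : seq vec,
    [/\ uniq s,
        forall x, x \in s <->
          (supp be x /\ (supp (coxeter al) x \/ supp (coxeter_inv al) x) /\
           ~ supp al x) &
        size s = m].

Definition comp_full (al be : vec) : Prop :=
  exists p, in_Pic p /\ forall q, same_comp p q -> supp al q \/ supp be q.

Definition compat_deg (al be : vec) (m : rat) : Prop :=
  (Upsilon_re al /\ Upsilon_re be /\ comp_full al be /\
     exists k : nat, m = k%:R /\ adj al be k) \/
  (~ (Upsilon_re al /\ Upsilon_re be /\ comp_full al be) /\
     m = Num.max (compat_right al be) (compat_left al be)).

End WithData.
End AffineRoots.

(* Main.v *)
Require Import Defs.
From HB Require Import structures.
From mathcomp Require Import all_boot all_order all_algebra.
From mathcomp Require Import ring lra zify.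
Set Implicit Arguments. Unset Strict Implicit. Unset Printing Implicit Defensive.
Import Order.TTheory GRing.Theory Num.Theory.
Local Open Scope ring_scope.

Section S.
Variable n : nat.
Variable A : 'M[int]_n.
Variable d : 'I_n -> rat.
Hypothesis hsym : symmetrizing A d.
Hypothesis hdiag : forall i, A i i = 2.

Definition Av (v : vec n) (i : 'I_n) : rat := \sum_j a A i j * coeff v j.

Lemma coeffD (u v : vec n) i : coeff (u + v) i = coeff u i + coeff v i.
Proof. by rewrite /coeff mxE. Qed.
Lemma coeffN (u : vec n) i : coeff (- u) i = - coeff u i.
Proof. by rewrite /coeff mxE. Qed.
Lemma coeffZ k (u : vec n) i : coeff (k *: u) i = k * coeff u i.
Proof. by rewrite /coeff mxE. Qed.
Lemma coeffB (u v : vec n) i : coeff (u - v) i = coeff u i - coeff v i.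
Proof. by rewrite coeffD coeffN. Qed.
Lemma coeff_simple (i j : 'I_n) : coeff (simple i) j = (i == j)%:R :> rat.
Proof. by rewrite /coeff /simple mxE eqxx /= eq_sym. Qed.

Lemma K_def (u v : vec n) : K A d u v = \sum_i coeff u i * d i * Av v i.
Proof.
rewrite /K; apply: eq_bigr => i _; rewrite /Av mulr_sumr; apply: eq_bigr => j _.
ring.
Qed.

Lemma K_sym (u v : vec n) : K A d u v = K A d v u.
Proof.
rewrite /K exchange_big /=; apply: eq_bigr => i _; apply: eq_bigr => j _.
rewrite (proj2 hsym); ring.
Qed.

Lemma K_addl (u v w : vec n) : K A d (u + v) w = K A d u w + K A d v w.
Proof. by rewrite !K_def -big_split; apply: eq_bigr => i _ /=; rewrite coeffD !mulrDl. Qed.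
Lemma K_scalel k (u w : vec n) : K A d (k *: u) w = k * K A d u w.
Proof. by rewrite !K_def mulr_sumr; apply: eq_bigr => i _; rewrite coeffZ; ring. Qed.
Lemma K_oppl (u w : vec n) : K A d (- u) w = - K A d u w.
Proof. by rewrite -scaleN1r K_scalel mulN1r. Qed.
Lemma K_subl (u v w : vec n) : K A d (u - v) w = K A d u w - K A d v w.
Proof. by rewrite K_addl K_oppl. Qed.
Lemma K_addr (u v w : vec n) : K A d w (u + v) = K A d w u + K A d w v.
Proof. by rewrite !(K_sym w) K_addl. Qed.
Lemma K_scaler k (u w : vec n) : K A d w (k *: u) = k * K A d w u.
Proof. by rewrite !(K_sym w) K_scalel. Qed.
Lemma K_subr (u v w : vec n) : K A d w (u - v) = K A d w u - K A d w v.
Proof. by rewrite !(K_sym w) K_subl. Qed.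

Lemma K_simple_l i (v : vec n) : K A d (simple i) v = d i * Av v i.
Proof.
rewrite K_def (bigD1 i) //= big1 ?addr0; first by rewrite coeff_simple eqxx mul1r.
by move=> j /negbTE hj; rewrite coeff_simple eq_sym hj !mul0r.
Qed.

Lemma d_neq0 i : d i != 0.
Proof. by have := (proj1 hsym i); rewrite lt0r => /andP []. Qed.

Lemma K_simple_co i (v : vec n) : K A d (simple_co d i) v = Av v i.
Proof. by rewrite /simple_co K_scalel K_simple_l mulrA mulVf ?mul1r ?d_neq0. Qed.

Lemma K_refl i (u v : vec n) : K A d (refl A d i u) (refl A d i v) = K A d u v.
Proof.
rewrite /refl !K_subl !K_subr !K_scalel !K_scaler.
rewrite (K_sym u (simple i)) !K_simple_l !mulKf ?d_neq0 //.
have -> : Av (simple i) i = 2.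
  rewrite /Av (bigD1 i) //= big1 ?addr0; first by rewrite coeff_simple eqxx mulr1 /a hdiag.
  by move=> j /negbTE hj; rewrite coeff_simple eq_sym hj mulr0.
ring.
Qed.

Lemma Av_simple i : Av (simple i) i = 2.
Proof.
rewrite /Av (bigD1 i) //= big1 ?addr0; first by rewrite coeff_simple eqxx mulr1 /a hdiag.
by move=> j /negbTE hj; rewrite coeff_simple eq_sym hj mulr0.
Qed.

Lemma K_act l (u v : vec n) : K A d (act A d l u) (act A d l v) = K A d u v.
Proof. by elim: l => //= i l IH; rewrite K_refl. Qed.

Lemma K_real v : real_root A d v -> K A d v v > 0.
Proof.
case=> w [i ->]; rewrite K_act K_simple_l Av_simple.
by rewrite mulr_gt0 // (proj1 hsym).
Qed.

Lemma coeff_refl i (v : vec n) j :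
  coeff (refl A d i v) j = coeff v j - K A d (simple_co d i) v * (i == j)%:R.
Proof. by rewrite /refl coeffB coeffZ coeff_simple. Qed.

Lemma coeff_act_notin l (v : vec n) j : j \notin l -> coeff (act A d l v) j = coeff v j.
Proof.
elim: l => //= i l IH; rewrite in_cons negb_or => /andP [hji hjl].
by rewrite coeff_refl eq_sym (negbTE hji) mulr0 subr0 IH.
Qed.

Lemma mem_take_enum k (j : 'I_n) : (j \in take k (enum 'I_n)) = (j < k)%N.
Proof.
rewrite -(mem_map val_inj) map_take val_enum_ord take_iota mem_iota /=.
by rewrite add0n leq_min ltn_ord andbT.
Qed.

Lemma mem_drop_enum k (j : 'I_n) : (j \in drop k (enum 'I_n)) = (k <= j)%N.
Proof.
rewrite -(mem_map val_inj) map_drop val_enum_ord drop_iota mem_iota /= add0n.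
case: j => j hj /=; apply/idP/idP; first by case/andP.
by move=> hkj; rewrite hkj /=; lia.
Qed.

Lemma coxeter_Av (gamma delta : vec n) k :
  coxeter A d gamma = gamma + delta ->
  Av gamma k + \sum_(j : 'I_n | (k < j)%N) a A k j * coeff delta j = - coeff delta k.
Proof.
move=> hc.
set s := enum 'I_n.
have hs : s = take k s ++ k :: drop k.+1 s.
  by rewrite -{1}(cat_take_drop k s) (drop_nth k) ?size_enum_ord ?ltn_ord // nth_ord_enum.
set q := drop k.+1 s.
have hcj : forall j : 'I_n, coeff (coxeter A d gamma) j = coeff (act A d (k :: q) gamma) j
    \/ (j < k)%N.
  move=> j; case: (ltnP j k) => hjk; [by right | left].
  by rewrite /coxeter -/s {1}hs /act foldr_cat -/(act A d _ _) coeff_act_notin // mem_take_enum -leqNgt.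
have hq : forall j : 'I_n, coeff (act A d q gamma) j = coeff gamma j + ((k < j)%N)%:R * coeff delta j.
  move=> j; case: (ltnP k j) => hkj.
  - case: (hcj j) => [|]; last by move=> hjk; exfalso; lia.
    rewrite hc coeffD /= coeff_refl.
    have -> : (k == j) = false by apply/negbTE; apply/eqP => e; move: hkj; rewrite e ltnn.
    by rewrite mulr0 subr0 mul1r => <-.
  - rewrite mul0r addr0 coeff_act_notin // mem_drop_enum -ltnNge ltnS //.
case: (hcj k) => [|]; last by rewrite ltnn.
rewrite hc coeffD /= coeff_refl eqxx mulr1 K_simple_co hq ltnn mul0r addr0 => h.
have h2 : Av (act A d q gamma) k = - coeff delta k.
  by move: h; lra.
rewrite -h2 /Av [X in _ + X = _]big_mkcond -big_split /=; apply: eq_bigr => j _.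
rewrite hq; case: (k < j)%N; rewrite /= ?mul1r ?mul0r ?addr0; ring.
Qed.

Lemma imag_Av (v : vec n) i : imag_root A d v -> Av v i = 0.
Proof. by case=> _ _ h; rewrite -K_simple_co h. Qed.

Lemma imag_K (u v : vec n) : imag_root A d v -> K A d u v = 0.
Proof. by move=> h; rewrite K_def big1 // => i _; rewrite imag_Av // mulr0. Qed.

Lemma real_not_imag (v : vec n) : real_root A d v -> imag_root A d v -> False.
Proof. by move=> /K_real hr /(imag_K v); move: hr => /[swap] ->; rewrite ltxx. Qed.

Lemma sum_split3 (F : 'I_n -> rat) (i : 'I_n) :
  \sum_j F j = \sum_(j : 'I_n | (j < i)%N) F j + \sum_(j : 'I_n | (i < j)%N) F j + F i.
Proof.
rewrite (bigD1 i) //= addrC; congr (_ + _); rewrite (bigID (fun j : 'I_n => (j < i)%N)) /=.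
congr (_ + _); apply: eq_bigl => j; rewrite -val_eqE /=; by case: ltngtP.
Qed.

Lemma plus_id x : 0 <= x -> plus x = x.
Proof. by move=> h; rewrite /plus max_l. Qed.

Lemma LR_formula (c : 'I_n -> rat) (gamma delta : vec n) :
  (forall i, 0 <= c i) -> (forall i, 0 <= coeff delta i) ->
  (forall i, Av delta i = 0) -> coxeter A d gamma = gamma + delta ->
  (- (\sum_i c i * coeff delta i) - \sum_(i < n) \sum_(j < n | (i < j)%N)
        a A i j * plus (c i) * plus (coeff delta j) = \sum_i c i * Av gamma i) /\
  (- (\sum_i c i * coeff delta i) - \sum_(i < n) \sum_(j < n | (j < i)%N)
        a A i j * plus (c i) * plus (coeff delta j) = - \sum_i c i * Av gamma i).
Proof.
move=> hc hd hAv hcox; split.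
- apply/eqP; rewrite -subr_eq0 -!sumrN -!big_split /=; apply/eqP; apply: big1 => i _.
  have := @coxeter_Av gamma delta i hcox.
  rewrite (plus_id (hc i)); under eq_bigr => j _ do rewrite (plus_id (hd j)).
  move=> h; have -> : Av gamma i = - coeff delta i - \sum_(j < n | (i < j)%N) a A i j * coeff delta j.
    by rewrite -h; ring.
  have -> : \sum_(j < n | (i < j)%N) a A i j * c i * coeff delta j =
     c i * \sum_(j < n | (i < j)%N) (a A i j * coeff delta j).
    by rewrite mulr_sumr; apply: eq_bigr => j _; ring.
  ring.
- apply/eqP; rewrite -subr_eq0 opprK -!sumrN -!big_split /=; apply/eqP; apply: big1 => i _.
  have := @coxeter_Av gamma delta i hcox.
  have hz := hAv i; rewrite /Av (sum_split3 _ i) in hz.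
  have ha : a A i i = 2 by rewrite /a hdiag.
  rewrite ha in hz.
  rewrite (plus_id (hc i)); under eq_bigr => j _ do rewrite (plus_id (hd j)).
  move=> h; have -> : Av gamma i = - coeff delta i - \sum_(j < n | (i < j)%N) a A i j * coeff delta j.
    by rewrite -h; ring.
  have -> : \sum_(j < n | (j < i)%N) a A i j * c i * coeff delta j =
     c i * \sum_(j < n | (j < i)%N) (a A i j * coeff delta j).
    by rewrite mulr_sumr; apply: eq_bigr => j _; ring.
  have -> : \sum_(j < n | (j < i)%N) (a A i j * coeff delta j) =
     - 2 * coeff delta i - \sum_(j < n | (i < j)%N) a A i j * coeff delta j.
    by move: hz; lra.
  ring.
Qed.

Lemma delta_pos (delta : vec n) :
  (forall i j, i != j -> A i j <= 0) -> indecomposable A ->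
  delta != 0 -> (forall i, 0 <= coeff delta i) -> (forall i, Av delta i = 0) ->
  forall i, 0 < coeff delta i.
Proof.
move=> hoff hind hnz hge hAv i0; rewrite lt0r hge andbT; apply/negP => /eqP h0.
pose S := [set j | coeff delta j == 0].
have hS0 : S != set0 by apply/set0Pn; exists i0; rewrite inE h0.
have hST : S != setT.
  apply: contra hnz => /eqP hT; apply/eqP/rowP => j; rewrite mxE.
  have : j \in S by rewrite hT inE.
  by rewrite inE /coeff (ord1 ord0) => /eqP.
have [i [j [hi hj hij]]] := hind S hS0 hST.
move: hi hj; rewrite !inE => /eqP hi hj.
have hne : i != j by apply: contraNneq hj => <-; rewrite hi.
have hs : \sum_(k | k != i) -(a A i k * coeff delta k) = 0.
  by rewrite sumrN; move: (hAv i); rewrite /Av (bigD1 i) //= hi mulr0 add0r => ->; rewrite oppr0.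
have hF : forall k, k != i -> 0 <= - (a A i k * coeff delta k).
  move=> k hk; rewrite oppr_ge0 mulr_le0_ge0 //.
  by rewrite /a lerz0 hoff // eq_sym.
have hji : j != i by rewrite eq_sym.
have := psumr_eq0P hF hs hji.
move=> /eqP; rewrite oppr_eq0 mulf_eq0 => /orP [].
- by rewrite /a intr_eq0 (negbTE hij).
- by rewrite (negbTE hj).
Qed.

Lemma main (aff : 'I_n) (delta deltav gamma : vec n) :
  (forall i j, i != j -> A i j <= 0) -> indecomposable A ->
  is_delta A d delta -> coxeter A d gamma = gamma + delta ->
  forall alpha, Phi_c A d aff delta gamma alpha -> alpha != delta ->
  (compat_deg A d aff delta deltav gamma alpha delta 0 <-> Upsilon_re A d aff gamma alpha).
Proof.
move=> hoff hind [dim dpos _] hcox alpha hPhi hne.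
have hAvd : forall i, Av delta i = 0 := fun i => imag_Av i dim.
have hdge : forall i, 0 <= coeff delta i := proj2 dpos.
have hdgt := delta_pos hoff hind (proj1 dpos) hdge hAvd.
have hnUd : ~ Upsilon_re A d aff gamma delta.
  by case=> _ hr _ _; exact: real_not_imag hr dim.
have hcd : compat_deg A d aff delta deltav gamma alpha delta 0 <->
    0 = Num.max (compat_right A d delta deltav alpha delta)
                (compat_left A d delta deltav alpha delta).
  split; first by case => [[_ [h _]] | [_ ->]] //.
  by move=> h; right; split => //; case=> _ [h' _].
rewrite hcd.
have hreal : forall al, real_root A d al -> positive al ->
   compat_left A d delta deltav al delta = (2 / K A d al al) * K A d gamma al /\
   compat_right A d delta deltav al delta = - ((2 / K A d al al) * K A d gamma al).
  move=> al hr [_ hpos].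
  have hK := K_real hr.
  have hco : coroot A d delta deltav al = (2 / K A d al al) *: al.
    by rewrite /coroot gt_eqF.
  have hc : forall i, 0 <= coco d (coroot A d delta deltav al) i.
    move=> i; rewrite hco /coco coeffZ; apply: mulr_ge0; first exact: ltW (proj1 hsym i).
    by apply: mulr_ge0 => //; apply: divr_ge0 => //; exact: ltW.
  have [hl hr'] := LR_formula hc hdge hAvd hcox.
  have hs : \sum_i coco d (coroot A d delta deltav al) i * Av gamma i =
      (2 / K A d al al) * K A d gamma al.
    rewrite (K_sym gamma) (K_def al gamma) mulr_sumr; apply: eq_bigr => i _.
    by rewrite hco /coco coeffZ; ring.
  by rewrite /compat_left /compat_right hl hr' hs.
case: hPhi => [[i ->] | [[hpr hnU] | [hU | hd]]].
- split; last first.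
    case=> [[_ [_ hp]]] _ _ _; move: (hp i); rewrite coeffN coeff_simple eqxx.
    by rewrite oppr_ge0 ler10.
  move=> h; exfalso.
  have hKe : K A d (- simple i) (- simple i) = d i * 2.
    by rewrite K_oppl K_sym K_oppl opprK K_simple_l Av_simple.
  have hco : forall j, coco d (coroot A d delta deltav (- simple i)) j = - ((i == j)%:R).
    move=> j; rewrite /coroot hKe mulf_neq0 ?d_neq0 //= /coco coeffZ coeffN coeff_simple.
    case: eqP => [<-|_]; last by rewrite !mulr0 oppr0.
    by field; rewrite d_neq0.
  have hr : compat_right A d delta deltav (- simple i) delta = coeff delta i.
    rewrite /compat_right [X in _ - X = _]big1; last first.
      move=> k _; apply: big1 => j _.
      by rewrite hco /plus max_r ?mulr0 ?mul0r // oppr_le0 ler0n.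
    rewrite subr0 (bigD1 i) //= big1 ?addr0; first by rewrite hco eqxx mulN1r opprK.
    by move=> j hj; rewrite hco eq_sym (negbTE hj) oppr0 mul0r.
  have := le_max (compat_right A d delta deltav (- simple i) delta)
      (compat_right A d delta deltav (- simple i) delta)
      (compat_left A d delta deltav (- simple i) delta).
  rewrite lexx /= -h hr => hle.
  by have := hdgt i; rewrite ltNge hle.
- have hr : real_root A d alpha.
    case: (proj1 hpr) => // him; exfalso; apply: hnU.
    by rewrite /Uc imag_K.
  have [hl hrr] := hreal alpha hr (proj2 hpr).
  split; last by case.
  move=> h; exfalso; apply: hnU.
  set L := (2 / K A d alpha alpha) * K A d gamma alpha in hl hrr.
  rewrite hl hrr in h.
  have h1 : L <= Num.max (- L) L by rewrite le_max lexx orbT.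
  have h2 : - L <= Num.max (- L) L by rewrite le_max lexx.
  rewrite -h in h1 h2.
  have hL0 : L = 0 by move: h1 h2; lra.
  move: hL0; rewrite /L => /eqP; rewrite mulf_eq0 => /orP [].
    by rewrite mulf_eq0 invr_eq0 (gt_eqF (K_real hr)) orbF.
  by move=> /eqP.
- split => // _.
  case: hU => hpr hr hUc _.
  have [hl hrr] := hreal alpha hr (proj2 hpr).
  by rewrite hl hrr hUc mulr0 oppr0 maxxx.
- by rewrite hd eqxx in hne.
Qed.
End S.

Theorem proposition5p6 (n : nat) (A : 'M[int]_n) (d : 'I_n -> rat)
    (aff : 'I_n) (delta deltav gamma : 'rV[rat]_n) :
  affine_type A -> symmetrizing A d ->
  is_delta A d delta -> is_delta_dual A d deltav ->
  coeff delta aff = 1 ->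
  coeff gamma aff = 0 -> coxeter A d gamma = gamma + delta ->
  forall alpha : 'rV[rat]_n,
    Phi_c A d aff delta gamma alpha -> alpha != delta ->
    (compat_deg A d aff delta deltav gamma alpha delta 0 <->
     Upsilon_re A d aff gamma alpha).
Proof.
move=> [[hdiag [hoff _]] hind _] hsym hdel _ _ _ hcox.
exact: (@main n A d hsym hdiag aff delta deltav gamma hoff hind hdel hcox).
Qed.
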